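(* For every enhanced Gelfand--Zetlin pattern $P$ with top row $\lambda$, the cell $C_P$ is nonempty and homeomorphic to an open ball of dimension $\mathrm{rk}\,P$.
   Context: Let $\lambda=(\lambda_1\ge\dots\ge\lambda_n)$ be a partition. Coordinates $y_{ij}$ ($i,j\ge1$, $i+j\le n$) on $\mathbb{R}^{n(n-1)/2}$, with $y_{0j}=\lambda_{n+1-j}$; $GZ(\lambda)$ is defined by $y_{i-1,j}\le y_{ij}\le y_{i-1,j+1}$. A GZ pattern with top row $\lambda$ is an integer array $a_{ij}$, $0\le i\le n-1$, $1\le j\le n-i$, with $a_{0j}=\lambda_{n+1-j}$ and $a_{i-1,j}\le a_{ij}\le a_{i-1,j+1}$. An enhanced GZ pattern is such an array with encircled entries and edges (each joining $a_{ij}$, $i\ge1$, with $a_{i-1,j}$ or $a_{i-1,j+1}$) such that: (1) row $0$ entries are encircled; (2) joined entries are equal, the lower one encircled; (3) for $i\ge1$: both $a_{ij},a_{i,j+1}$ are joined to $a_{i-1,j+1}$ iff both are joined to $a_{i+1,j}$; (4) if $a_{0j}=a_{0,j+1}$ then $a_{1j}$ is encircled and joined to both; (5) if $a_{i-1,j}<a_{i-1,j+1}$ and $a_{ij}=a_{i-1,j}$, then $a_{ij}$ is encircled and joined to $a_{i-1,j}$; (6) if $a_{i-1,j}<a_{i-1,j+1}$, $a_{ij}=a_{i-1,j+1}$, $a_{ij}$ encircled, then joined to $a_{i-1,j+1}$; (7) if $a_{i-1,j}=a_{i-1,j+1}=a_{ij}$ and the two upper entries are connected by a path of edges, then $a_{ij}$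 is encircled and joined to both; (8) if $a_{i-1,j}=a_{i-1,j+1}=a_{ij}$ and $a_{ij}$ is encircled, it is joined to at least one of them. The rank $\mathrm{rk}\,P$ is the number of non-encircled entries. Cell $C_P$: for each $i\ge1$ impose: if $a_{ij}$ is joined to $a_{i-1,j}$ (resp. $a_{i-1,j+1}$), then $y_{ij}=y_{i-1,j}$ (resp. $y_{ij}=y_{i-1,j+1}$); if no edge goes up from $a_{ij}$ and it is encircled, $y_{ij}=a_{ij}$; if no edge goes up and it is not encircled, impose $a_{ij}-1<y_{ij}$ if $a_{ij}-a_{i-1,j}\ge2$, else $y_{i-1,j}<y_{ij}$, and $y_{ij}<y_{i-1,j+1}$ if $a_{i-1,j+1}=a_{ij}$, else $y_{ij}<a_{ij}$. Let $\widehat{C_P}$ be the set so defined, $L$ its affine span, and $C_P=\widehat{C_P}\cap(GZ(\lambda)\cap L)^0$, where $(\cdot)^0$ is the relative interior in $L$. *)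

(* Defs.v *)
From HB Require Import structures.
From mathcomp Require Import all_boot all_order all_algebra.
From mathcomp Require Import all_classical all_reals all_analysis.

Set Implicit Arguments.
Unset Strict Implicit.
Unset Printing Implicit Defensive.

Import Order.TTheory GRing.Theory Num.Theory.
Import numFieldNormedType.Exports.
Local Open Scope classical_set_scope.
Local Open Scope ring_scope.

(* A partition lambda = (lambda_1 >= ... >= lambda_n) is a function    *)
(* lam : nat -> nat, used on indices 1..n.                             *)

Definition is_partition (n : nat) (lam : nat -> nat) : Prop :=
  forall k : nat, (1 <= k)%N -> (k < n)%N -> (lam k.+1 <= lam k)%N.

Definition gz_dom (n i j : nat) : bool :=
  [&& (i < n)%N, (1 <= j)%N & (j <= n - i)%N].

(* An enhanced GZ pattern datum: entries a i j, encircling enc i j,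
   edge jl i j joining a_{ij} to a_{i-1,j} and edge jr i j joining
   a_{ij} to a_{i-1,j+1} (only meaningful for i >= 1 on gz_dom). *)
Record egz_data := EGZ {
  egz_a  : nat -> nat -> int;
  egz_enc : nat -> nat -> bool;
  egz_jl : nat -> nat -> bool;
  egz_jr : nat -> nat -> bool }.

Definition is_GZ_pattern (n : nat) (lam : nat -> nat) (a : nat -> nat -> int)
  : Prop :=
  (forall j, gz_dom n 0 j -> a 0%N j = (lam (n.+1 - j)%N)%:Z) /\
  (forall i j, (1 <= i)%N -> gz_dom n i j ->
     a i.-1 j <= a i j /\ a i j <= a i.-1 j.+1).

Definition egz_adj (n : nat) (P : egz_data) (p q : nat * nat) : Prop :=
  exists i j, [/\ (1 <= i)%N, gz_dom n i j &
    ((egz_jl P i j /\ ((p = (i, j) /\ q = (i.-1, j)) \/ (q = (i, j) /\ p = (i.-1, j))))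
  \/ (egz_jr P i j /\ ((p = (i, j) /\ q = (i.-1, j.+1)) \/ (q = (i, j) /\ p = (i.-1, j.+1)))))].

Inductive egz_path (n : nat) (P : egz_data) : nat * nat -> nat * nat -> Prop :=
| egz_path_refl p : egz_path n P p p
| egz_path_step p q r : egz_adj n P p q -> egz_path n P q r -> egz_path n P p r.

Definition is_enhanced_GZ (n : nat) (lam : nat -> nat) (P : egz_data) : Prop :=
  let a := egz_a P in let enc := egz_enc P in
  let jl := egz_jl P in let jr := egz_jr P in
  is_GZ_pattern n lam a /\
  (* (1) *)
  (forall j, gz_dom n 0 j -> enc 0%N j) /\
  (* (2) *)
  (forall i j, (1 <= i)%N -> gz_dom n i j ->
     (jl i j -> a i j = a i.-1 j /\ enc i j) /\
     (jr i j -> a i j = a i.-1 j.+1 /\ enc i j)) /\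
  (* (3) *)
  (forall i j, (1 <= i)%N -> gz_dom n i j -> gz_dom n i j.+1 ->
     ((jr i j /\ jl i j.+1) <-> (jl i.+1 j /\ jr i.+1 j))) /\
  (* (4) *)
  (forall j, gz_dom n 0 j -> gz_dom n 0 j.+1 -> a 0%N j = a 0%N j.+1 ->
     [/\ enc 1%N j, jl 1%N j & jr 1%N j]) /\
  (* (5) *)
  (forall i j, (1 <= i)%N -> gz_dom n i j ->
     a i.-1 j < a i.-1 j.+1 -> a i j = a i.-1 j -> enc i j /\ jl i j) /\
  (* (6) *)
  (forall i j, (1 <= i)%N -> gz_dom n i j ->
     a i.-1 j < a i.-1 j.+1 -> a i j = a i.-1 j.+1 -> enc i j -> jr i j) /\
  (* (7) *)
  (forall i j, (1 <= i)%N -> gz_dom n i j ->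
     a i.-1 j = a i.-1 j.+1 -> a i j = a i.-1 j ->
     egz_path n P (i.-1, j) (i.-1, j.+1) -> [/\ enc i j, jl i j & jr i j]) /\
  (* (8) *)
  (forall i j, (1 <= i)%N -> gz_dom n i j ->
     a i.-1 j = a i.-1 j.+1 -> a i j = a i.-1 j -> enc i j -> jl i j \/ jr i j).

Definition egz_rank (n : nat) (P : egz_data) : nat :=
  (\sum_(i < n) \sum_(1 <= j < (n - i).+1) (~~ egz_enc P i j : nat))%N.

Definition idxb (n : nat) (p : nat * nat) : bool :=
  [&& (1 <= p.1)%N, (1 <= p.2)%N & (p.1 + p.2 <= n)%N].

Definition Idx (n : nat) := {p : nat * nat | idxb n p}.

Notation GZspace R n := {ptws Idx n -> R}.

(* y_{ij}, extended by y_{0j} = lambda_{n+1-j} (and 0 off the index set) *)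
Definition ycoord (R : realType) (n : nat) (lam : nat -> nat)
  (y : GZspace R n) (i j : nat) : R :=
  if i == 0%N then (lam (n.+1 - j)%N)%:R
  else match @insub _ (idxb n) (Idx n) (i, j) with
       | Some k => y k | None => 0 end.

Definition GZpoly (R : realType) (n : nat) (lam : nat -> nat) : set (GZspace R n) :=
  [set y | forall i j, (1 <= i)%N -> (1 <= j)%N -> (i + j <= n)%N ->
     ycoord lam y i.-1 j <= ycoord lam y i j /\
     ycoord lam y i j <= ycoord lam y i.-1 j.+1].

Definition hatC (R : realType) (n : nat) (lam : nat -> nat) (P : egz_data)
  : set (GZspace R n) :=
  let a := egz_a P in let enc := egz_enc P in
  let jl := egz_jl P in let jr := egz_jr P in
  [set y | forall i j, (1 <= i)%N -> gz_dom n i j ->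
     let Y := ycoord lam y in
     (jl i j -> Y i j = Y i.-1 j) /\
     (jr i j -> Y i j = Y i.-1 j.+1) /\
     (~~ jl i j -> ~~ jr i j -> enc i j -> Y i j = (a i j)%:~R) /\
     (~~ jl i j -> ~~ jr i j -> ~~ enc i j ->
        (if (2%:Z <= a i j - a i.-1 j) then (a i j)%:~R - 1 < Y i j
         else Y i.-1 j < Y i j) /\
        (if a i.-1 j.+1 == a i j then Y i j < Y i.-1 j.+1
         else Y i j < (a i j)%:~R))].

Definition affine_span (R : realType) (I : Type) (S : set {ptws I -> R})
  : set {ptws I -> R} :=
  [set y | exists (m : nat) (x : 'I_m -> {ptws I -> R}) (c : 'I_m -> R),
     [/\ forall k, S (x k), \sum_(k < m) c k = 1 &
         forall t : I, y t = \sum_(k < m) c k * x k t]].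

Definition rel_interior (T : topologicalType) (L K : set T) : set T :=
  [set x | K x /\ exists U : set T, [/\ open U, U x & U `&` L `<=` K]].

Definition cell (R : realType) (n : nat) (lam : nat -> nat) (P : egz_data)
  : set (GZspace R n) :=
  let C : set (GZspace R n) := @hatC R n lam P in
  let L : set (GZspace R n) := @affine_span R (Idx n) C in
  C `&` @rel_interior (GZspace R n) L (@GZpoly R n lam `&` L).

Definition homeomorphic (X Y : topologicalType) (A : set X) (B : set Y) : Prop :=
  exists (f : X -> Y) (g : Y -> X),
    [/\ (forall x, A x -> B (f x)), (forall y, B y -> A (g y)),
        (forall x, A x -> g (f x) = x), (forall y, B y -> f (g y) = y)
      & {within A, continuous f} /\ {within B, continuous g}].

Definition open_ball (R : realType) (d : nat) : set {ptws 'I_d -> R} :=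
  [set v | \sum_(k < d) v k ^+ 2 < 1].

(* Main.v *)
Require Import Defs.
From HB Require Import structures.
From mathcomp Require Import all_boot all_order all_algebra.
From mathcomp Require Import all_classical all_reals all_analysis.
From mathcomp Require Import ring lra zify.
From Stdlib Require Import Lia.
Set Implicit Arguments.
Unset Strict Implicit.
Unset Printing Implicit Defensive.
Import Order.TTheory GRing.Theory Num.Theory.
Import numFieldNormedType.Exports.
Local Open Scope classical_set_scope.
Local Open Scope ring_scope.


Definition homeo' (X Y : topologicalType) (A : set X) (B : set Y) :=
  exists (f : X -> Y) (g : Y -> X),
   [/\ (forall x, A x -> B (f x)), (forall y, B y -> A (g y)),
       (forall x, A x -> g (f x) = x), (forall y, B y -> f (g y) = y) &
       ((forall x, A x -> {for x, continuous f}) /\ (forall y, B y -> {for y, continuous g}))].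

Lemma homeo'_homeo (X Y : topologicalType) (A : set X) (B : set Y) : homeo' A B -> homeomorphic A B.
Proof.
move=> [f [g [? ? ? ? [cf cg]]]]; exists f, g; split => //; split;
  apply: continuous_in_subspaceT => x; rewrite in_setE => Ax; [exact: cf|exact: cg].
Qed.

Lemma homeo'_trans (X Y Z : topologicalType) (A : set X) (B : set Y) (C : set Z) :
  homeo' A B -> homeo' B C -> homeo' A C.
Proof.
move=> [f [g [fA gB gf fg [cf cg]]]] [f' [g' [fB gC gf' fg' [cf' cg']]]].
exists (f' \o f), (g \o g'); split => /=.
- by move=> x /fA /fB.
- by move=> y /gC /gB.
- by move=> x Ax; rewrite gf' ?gf //; exact: fA.
- by move=> y Cy; rewrite fg ?fg' //; exact: gC.
split.
- by move=> x Ax; apply: continuous_comp; [exact: cf|apply: cf'; exact: fA].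
- by move=> y Cy; apply: continuous_comp; [exact: cg'|apply: cg; exact: gC].
Qed.

Section Ptws.
Context {R : realType}.
Lemma ptws_for (T : topologicalType) (D : Type) (h : T -> {ptws D -> R}) x :
  (forall d, {for x, continuous (fun t => h t d)}) -> {for x, continuous h}.
Proof.
move=> H; apply/cvg_sup => d B /=.
move=> nB; have := nB; rewrite nbhsE /=; case=> O [Oop Ohx] OB; move=> {nB}.
case: Oop => A Aop AO.
have : nbhs (h x d) A.
  apply: open_nbhs_nbhs; split => //.
  by move: Ohx; rewrite -AO.
move/H => HA.
have HA' : nbhs x ((fun t => h t d) @^-1` A) := HA.
have HB : nbhs x (h @^-1` B).
  by apply: filterS HA' => t /= At; apply: OB; rewrite -AO.
by move: HB; rewrite nbhsE.
Qed.

Lemma coord_cont (D : eqType) (d : D) : continuous (fun g : {ptws D -> R} => g d).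
Proof. exact: (@proj_continuous D (fun _ => R) d). Qed.
End Ptws.

Lemma cont_comp' (T S U : topologicalType) (p : T -> S) (q : S -> U) x :
  {for x, continuous p} -> {for p x, continuous q} -> {for x, continuous (fun t => q (p t))}.
Proof. exact: continuous_comp. Qed.

Section ContLemmas.
Context {R : realType} {T : topologicalType}.
Implicit Types (f g : T -> R) (x : T).
Lemma cont_mul f g x : {for x, continuous f} -> {for x, continuous g} ->
  {for x, continuous (fun t => f t * g t)}.
Proof. move=> hf hg; exact: (@cvgM R T (nbhs x) _ f g _ _ hf hg). Qed.
Lemma cont_add f g x : {for x, continuous f} -> {for x, continuous g} ->
  {for x, continuous (fun t => f t + g t)}.
Proof. move=> hf hg; exact: (@cvgD R R^o T (nbhs x) _ f g _ _ hf hg). Qed.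
Lemma cont_sub f g x : {for x, continuous f} -> {for x, continuous g} ->
  {for x, continuous (fun t => f t - g t)}.
Proof. move=> hf hg; exact: (@cvgB R R^o T (nbhs x) _ f g _ _ hf hg). Qed.
Lemma cont_inv f x : f x != 0 -> {for x, continuous f} ->
  {for x, continuous (fun t => (f t)^-1)}.
Proof. move=> h0 hf; exact: (@cvgV R T (nbhs x) _ f _ h0 hf). Qed.
Lemma cont_cst (c : R) x : {for x, continuous (fun _ : T => c)}.
Proof. exact: cvg_cst. Qed.
Lemma cont_sqrt f x : {for x, continuous f} -> {for x, continuous (fun t => Num.sqrt (f t))}.
Proof. move=> hf; exact: (continuous_comp hf (@sqrt_continuous R (f x))). Qed.
Lemma cont_max f g x : {for x, continuous f} -> {for x, continuous g} ->
  {for x, continuous (fun t => Num.max (f t) (g t))}.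
Proof. move=> hf hg; exact: (@continuous_max R T f g x hf hg). Qed.
Lemma cont_opp f x : {for x, continuous f} -> {for x, continuous (fun t => - f t)}.
Proof. move=> hf; exact: (@cvgN R R^o T (nbhs x) _ f _ hf). Qed.
End ContLemmas.

Section Ball.
Context {R : realType} (D : finType).

Definition ssq (v : {ptws D -> R}) : R := \sum_(k : D) v k ^+ 2.
Definition ballD : set {ptws D -> R} := [set v | ssq v < 1].

Lemma ssq_ge0 v : 0 <= ssq v.
Proof. by apply: sumr_ge0 => k _; exact: sqr_ge0. Qed.

Lemma ssq_scale (v : {ptws D -> R}) (c : R) :
  ssq (fun k => v k * c) = ssq v * c ^+ 2.
Proof. by rewrite /ssq mulr_suml; apply: eq_bigr => k _; rewrite exprMn. Qed.

Lemma ssq_cont (T : topologicalType) (h : T -> {ptws D -> R}) x :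
  {for x, continuous h} -> {for x, continuous (fun t => ssq (h t))}.
Proof.
move=> hc; rewrite /ssq /continuous_at.
suff H : forall r, (fun t => \sum_(k <- r) h t k ^+ 2) @ x --> \sum_(k <- r) h x k ^+ 2.
  exact: H.
elim => [|k r IH].
  rewrite big_nil; under eq_cvg do rewrite big_nil; exact: cvg_cst.
rewrite big_cons; under eq_cvg do rewrite big_cons.
have ck : {for x, continuous (fun t => h t k)}.
  exact: (continuous_comp hc (@coord_cont R D k (h x))).
apply: (cont_add _ IH); exact: (cont_mul ck ck).
Qed.

Definition toball (w : {ptws D -> R}) : {ptws D -> R} :=
  fun k => w k * (Num.sqrt (1 + ssq w))^-1.
Definition fromball (v : {ptws D -> R}) : {ptws D -> R} :=
  fun k => v k * (Num.sqrt (1 - ssq v))^-1.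

Lemma RD_ball : homeo' [set: {ptws D -> R}] ballD.
Proof.
exists toball, fromball; split.
- move=> w _; rewrite /ballD /= /toball ssq_scale.
  have s0 := ssq_ge0 w.
  rewrite exprVn sqr_sqrtr ?addr_ge0 // ltr_pdivrMr ?ltr_wpDr // mul1r.
  by rewrite ltrDr.
- by [].
- move=> w _; apply: funext => k; rewrite /fromball /toball ssq_scale.
  have s0 := ssq_ge0 w.
  have p0 : 0 < 1 + ssq w by rewrite ltr_wpDr.
  rewrite exprVn sqr_sqrtr ?addr_ge0 //.
  have -> : 1 - ssq w / (1 + ssq w) = (1 + ssq w)^-1.
    by field; rewrite gt_eqF.
  rewrite sqrtrV ?ltW // invrK -mulrA mulVf ?mulr1 //.
  by rewrite gt_eqF // sqrtr_gt0.
- move=> v; rewrite /ballD /= => vb; apply: funext => k.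
  rewrite /fromball /toball ssq_scale.
  have s0 := ssq_ge0 v.
  have p0 : 0 < 1 - ssq v by rewrite subr_gt0.
  rewrite exprVn sqr_sqrtr ?ltW //.
  have -> : 1 + ssq v / (1 - ssq v) = (1 - ssq v)^-1.
    by field; rewrite gt_eqF.
  rewrite sqrtrV ?ltW // invrK -mulrA mulVf ?mulr1 //.
  by rewrite gt_eqF // sqrtr_gt0.
split.
- move=> w _; apply: ptws_for => k.
  apply: cont_mul; first exact: coord_cont.
  apply: cont_inv; first by rewrite gt_eqF // sqrtr_gt0 ltr_wpDr // ssq_ge0.
  apply: cont_sqrt; apply: cont_add; first exact: cont_cst.
  exact: ssq_cont.
- move=> v; rewrite /ballD /= => vb; apply: ptws_for => k.
  apply: cont_mul; first exact: coord_cont.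
  apply: cont_inv; first by rewrite gt_eqF // sqrtr_gt0 subr_gt0.
  apply: cont_sqrt; apply: cont_sub; first exact: cont_cst.
  exact: ssq_cont.
Qed.

Lemma reindex_ball : homeo' ballD (@open_ball R #|D|).
Proof.
have ssqE (v : {ptws D -> R}) : ssq v = \sum_(k < #|D|) v (enum_val k) ^+ 2.
  rewrite /ssq (reindex (@enum_val D (mem D))) //=; exists enum_rank => [k _|d _].
    exact: enum_valK.
  exact: enum_rankK.
exists (fun v : {ptws D -> R} => (fun k : 'I_#|D| => v (enum_val k)) : {ptws 'I_#|D| -> R}),
  (fun w : {ptws 'I_#|D| -> R} => (fun d => w (enum_rank d)) : {ptws D -> R}); split.
- by move=> v; rewrite /ballD /= ssqE.
- move=> w hw; rewrite /ballD /= ssqE /=.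
  have e k : enum_rank (@enum_val D (mem D) k) = k by exact: enum_valK.
  by under eq_bigr => k _ do rewrite e.
- by move=> v _; apply: funext => d; rewrite enum_rankK.
- by move=> w _; apply: funext => k; rewrite enum_valK.
- split => [v _|w _]; apply: ptws_for => k; exact: coord_cont.
Qed.
End Ball.

Section Poly.
Context {R : realType} (D K : finType) (f : K -> {ptws D -> R} -> R)
  (z0 : {ptws D -> R}).
Hypothesis fcont : forall k x, {for x, continuous (f k)}.
Hypothesis faff : forall k (x y : {ptws D -> R}) (t : R),
  f k (fun d => x d + t * (y d - x d)) = f k x + t * (f k y - f k x).
Hypothesis fpos : forall k, 0 < f k z0.

Let g k (v : {ptws D -> R}) : R := f k (fun d => z0 d + v d) - f k z0.
Let h k v := - g k v / f k z0.
Let mus (r : seq K) v : R := foldr (fun k acc => Num.max (h k v) acc) 0 r.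
Let mu v := mus (enum K) v.

Definition Spoly : set {ptws D -> R} := [set z | forall k, 0 < f k z].

Let g_hom k v t : g k (fun d => t * v d) = t * g k v.
Proof.
rewrite /g; have := faff k z0 (fun d => z0 d + v d) t.
have -> : (fun d => z0 d + t * (z0 d + v d - z0 d)) = (fun d => z0 d + t * v d).
  by apply: funext => d; congr (_ + _ * _); ring.
by move=> ->; ring.
Qed.

Let h_hom k v t : h k (fun d => t * v d) = t * h k v.
Proof. by rewrite /h g_hom; ring. Qed.

Let f_g k z : f k z = f k z0 + g k (fun d => z d - z0 d).
Proof.
rewrite /g; have -> : (fun d => z0 d + (z d - z0 d)) = z.
  by apply: funext => d; ring.
by ring.
Qed.

Let mus_hom r v t : 0 <= t -> mus r (fun d => t * v d) = t * mus r v.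
Proof.
move=> t0; elim: r => [|k r IH] /=; first by rewrite mulr0.
by rewrite IH h_hom maxr_pMr.
Qed.

Let mus_ge0 r v : 0 <= mus r v.
Proof. by elim: r => [|k r IH] //=; rewrite le_max IH orbT. Qed.

Let mus_lt1 r v : mus r v < 1 <-> forall k, k \in r -> h k v < 1.
Proof.
elim: r => [|k r IH] /=; first by split => // _; exact: ltr01.
rewrite gt_max; split.
  by move=> /andP[hk /IH H] k'; rewrite inE => /orP[/eqP->|/H].
move=> H; apply/andP; split; first by apply: H; rewrite inE eqxx.
by apply/IH => k' kr; apply: H; rewrite inE kr orbT.
Qed.

Let h_lt1 k v : h k v < 1 <-> 0 < f k (fun d => z0 d + v d).
Proof.
have fp := fpos k.
rewrite /h /g ltr_pdivrMr // mul1r; split => H; lra.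
Qed.

Let mu_S v : mu v < 1 <-> Spoly (fun d => z0 d + v d).
Proof.
rewrite /mu mus_lt1; split.
  by move=> H k; apply/h_lt1; apply: H; rewrite mem_enum.
by move=> H k _; apply/h_lt1; exact: H.
Qed.

Let mus_cont r (T : topologicalType) (p : T -> {ptws D -> R}) x :
  {for x, continuous p} -> {for x, continuous (fun t => mus r (p t))}.
Proof.
move=> pc; elim: r => [|k r IH] /=; first exact: cont_cst.
apply: cont_max => //.
rewrite /h; apply: cont_mul; last exact: cont_cst.
apply: cont_opp; rewrite /g; apply: cont_sub; last exact: cont_cst.
have c1 : {for x, continuous (fun t => (fun d => z0 d + p t d) : {ptws D -> R})}.
  apply: ptws_for => d; apply: cont_add; first exact: cont_cst.
  exact: (continuous_comp pc (@coord_cont R D d (p x))).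
exact: (cont_comp' c1 (@fcont k _)).
Qed.

Definition toR (z : {ptws D -> R}) : {ptws D -> R} :=
  fun d => (1 - mu (fun e => z e - z0 e))^-1 * (z d - z0 d).
Definition fromR (w : {ptws D -> R}) : {ptws D -> R} :=
  fun d => z0 d + (1 + mu w)^-1 * w d.

Lemma poly_RD : homeo' Spoly [set: {ptws D -> R}].
Proof.
exists toR, fromR; split => //.
- move=> w _; rewrite /fromR; apply/mu_S.
  have m0 : 0 <= mu w := mus_ge0 _ _.
  have p0 : 0 <= (1 + mu w)^-1 by rewrite invr_ge0 addr_ge0.
  by rewrite /mu mus_hom // -/(mu w) mulrC ltr_pdivrMr; lra.
- move=> z Sz; apply: funext => d; rewrite /fromR /toR.
  set v := (fun e => z e - z0 e).
  have : mu v < 1 by apply/mu_S; have -> : (fun d => z0 d + v d) = z by apply: funext => e; rewrite /v; ring.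
  move=> m1; have m0 : 0 <= mu v := mus_ge0 _ _.
  have p0 : 0 < 1 - mu v by rewrite subr_gt0.
  rewrite /mu mus_hom ?invr_ge0 ?ltW // -/(mu v).
  have -> : 1 + (1 - mu v)^-1 * mu v = (1 - mu v)^-1 by field; rewrite gt_eqF.
  by rewrite invrK mulrA mulfV ?gt_eqF // mul1r /v; ring.
- move=> w _; apply: funext => d; rewrite /fromR /toR.
  have m0 : 0 <= mu w := mus_ge0 _ _.
  have p0 : 0 < 1 + mu w by rewrite ltr_wpDr.
  have -> : (fun e => z0 e + (1 + mu w)^-1 * w e - z0 e) = (fun e => (1 + mu w)^-1 * w e).
    by apply: funext => e; ring.
  rewrite /mu mus_hom ?invr_ge0 ?ltW // -/(mu w).
  have -> : 1 - (1 + mu w)^-1 * mu w = (1 + mu w)^-1 by field; rewrite gt_eqF.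
  rewrite invrK; have -> : z0 d + (1 + mu w)^-1 * w d - z0 d = (1 + mu w)^-1 * w d by ring.
  by rewrite mulrA mulfV ?gt_eqF // mul1r.
split.
- move=> z Sz; apply: ptws_for => d; rewrite /toR.
  have cv : {for z, continuous (fun t : {ptws D -> R} => (fun e => t e - z0 e) : {ptws D -> R})}.
    apply: ptws_for => e; apply: cont_sub; last exact: cont_cst.
    exact: coord_cont.
  apply: cont_mul; last first.
    apply: cont_sub; last exact: cont_cst; exact: coord_cont.
  apply: cont_inv.
    have : mu (fun e => z e - z0 e) < 1.
      by apply/mu_S; have -> : (fun d => z0 d + (z d - z0 d)) = z by apply: funext => e; ring.
    by rewrite -subr_gt0 => /gt_eqF ->.
  apply: cont_sub; first exact: cont_cst.
  exact: mus_cont.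
- move=> w _; apply: ptws_for => d; rewrite /fromR.
  apply: cont_add; first exact: cont_cst.
  apply: cont_mul; last exact: coord_cont.
  apply: cont_inv; first by rewrite gt_eqF // ltr_wpDr // mus_ge0.
  apply: cont_add; first exact: cont_cst.
  by apply: mus_cont => y.
Qed.
End Poly.

Section GZ.
Context {R : realType} (n : nat) (lam : nat -> nat) (P : egz_data).
Hypothesis HP : is_enhanced_GZ n lam P.

Local Notation a := (egz_a P).
Local Notation enc := (egz_enc P).
Local Notation jl := (egz_jl P).
Local Notation jr := (egz_jr P).

Let Hpat : is_GZ_pattern n lam a := HP.1.
Let H1 : forall j, gz_dom n 0 j -> enc 0%N j := HP.2.1.
Let H2 : forall i j, (1 <= i)%N -> gz_dom n i j ->
     (jl i j -> a i j = a i.-1 j /\ enc i j) /\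
     (jr i j -> a i j = a i.-1 j.+1 /\ enc i j) := HP.2.2.1.
Let H3 : forall i j, (1 <= i)%N -> gz_dom n i j -> gz_dom n i j.+1 ->
     ((jr i j /\ jl i j.+1) <-> (jl i.+1 j /\ jr i.+1 j)) := HP.2.2.2.1.
Let H4 : forall j, gz_dom n 0 j -> gz_dom n 0 j.+1 -> a 0%N j = a 0%N j.+1 ->
     [/\ enc 1%N j, jl 1%N j & jr 1%N j] := HP.2.2.2.2.1.
Let H5 : forall i j, (1 <= i)%N -> gz_dom n i j ->
     a i.-1 j < a i.-1 j.+1 -> a i j = a i.-1 j -> enc i j /\ jl i j := HP.2.2.2.2.2.1.
Let H6 : forall i j, (1 <= i)%N -> gz_dom n i j ->
     a i.-1 j < a i.-1 j.+1 -> a i j = a i.-1 j.+1 -> enc i j -> jr i j := HP.2.2.2.2.2.2.1.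
Let H7 : forall i j, (1 <= i)%N -> gz_dom n i j ->
     a i.-1 j = a i.-1 j.+1 -> a i j = a i.-1 j ->
     egz_path n P (i.-1, j) (i.-1, j.+1) -> [/\ enc i j, jl i j & jr i j] := HP.2.2.2.2.2.2.2.1.
Let H8 : forall i j, (1 <= i)%N -> gz_dom n i j ->
     a i.-1 j = a i.-1 j.+1 -> a i j = a i.-1 j -> enc i j -> jl i j \/ jr i j := HP.2.2.2.2.2.2.2.2.

Lemma dom_prev i j : (1 <= i)%N -> gz_dom n i j -> gz_dom n i.-1 j /\ gz_dom n i.-1 j.+1.
Proof. by rewrite /gz_dom => i1 /and3P[? ? ?]; split; apply/and3P; split; lia. Qed.

Lemma dom_le i j : gz_dom n i j -> (i < n)%N /\ (1 <= j)%N /\ (j <= n - i)%N /\ (j <= n)%N.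
Proof. by move=> /and3P[? ? ?]; lia. Qed.

Lemma pat_le i j : (1 <= i)%N -> gz_dom n i j -> a i.-1 j <= a i j /\ a i j <= a i.-1 j.+1.
Proof. by move=> i1 d; apply: Hpat.2. Qed.

Lemma pat_row0 j : gz_dom n 0 j -> a 0%N j = (lam (n.+1 - j)%N)%:Z.
Proof. by move=> d; apply: Hpat.1. Qed.

Definition freeb (i j : nat) : bool := [&& (1 <= i)%N, gz_dom n i j & ~~ enc i j].
Definition FT := {p : 'I_n.+1 * 'I_n.+1 | freeb p.1 p.2}.

Definition zc (z : {ptws FT -> R}) (i j : nat) : R :=
  match (insub (inord i, inord j) : option FT) with Some p => z p | None => 0 end.

Fixpoint gval (z : {ptws FT -> R}) (i j : nat) {struct i} : R :=
  match i with
  | 0 => (lam (n.+1 - j)%N)%:R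
  | i'.+1 => if enc i'.+1 j then
               (if jl i'.+1 j then gval z i' j
                else if jr i'.+1 j then gval z i' j.+1 else (a i'.+1 j)%:~R)
             else zc z i'.+1 j
  end.

Definition Emb (z : {ptws FT -> R}) : {ptws Idx n -> R} :=
  fun k => gval z (val k).1 (val k).2.
Definition Proj (y : {ptws Idx n -> R}) : {ptws FT -> R} :=
  fun p => ycoord lam y (val p).1 (val p).2.

Lemma zc_free z i j (Hf : freeb i j) :
  exists p : FT, zc z i j = z p /\ ((val p).1 : nat) = i /\ ((val p).2 : nat) = j.
Proof.
have [i1 d _] := and3P Hf; have [? [? [? ?]]] := dom_le d.
have ei : ((inord i : 'I_n.+1) : nat) = i by rewrite inordK //; lia.
have ej : ((inord j : 'I_n.+1) : nat) = j by rewrite inordK //; lia.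
rewrite /zc; case: insubP => [p Pp vp|].
  by exists p; split => //; rewrite vp /= ?ei ?ej.
by rewrite /= ei ej Hf.
Qed.

Lemma gval_succ z i j : gval z i.+1 j =
  if enc i.+1 j then (if jl i.+1 j then gval z i j
     else if jr i.+1 j then gval z i j.+1 else (a i.+1 j)%:~R)
  else zc z i.+1 j.
Proof. by []. Qed.

Lemma ycoord_in (y : {ptws Idx n -> R}) (k : Idx n) :
  ycoord lam y (val k).1 (val k).2 = y k.
Proof.
rewrite /ycoord; case: k => [[i j] /= h]; have /and3P[i1 _ _] := h.
have -> : (i == 0%N) = false by case: i i1 {h}.
by rewrite -[(i, j)]/(val (exist _ (i, j) h : Idx n)) valK.
Qed.

Lemma ycoord_E z i j : gz_dom n i j -> ycoord lam (Emb z) i j = gval z i j.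
Proof.
rewrite /ycoord; case: i => [|i] d //=; have [? [? [? ?]]] := dom_le d.
case: insubP => [k _ vk|]; first by rewrite /Emb vk.
by move/negP; case; rewrite /idxb /=; lia.
Qed.

Lemma gval_ext z i j (d : gz_dom n i j) (Hin : (1 <= i)%N) :
  (jl i j -> gval z i j = gval z i.-1 j).
Proof.
case: i d Hin => // i d _ hl; have [_ e] := (H2 (ltn0Sn i) d).1 hl.
by rewrite gval_succ e hl.
Qed.

Lemma gval_DE z i j : (1 <= i)%N -> gz_dom n i j -> jl i j -> jr i j ->
  gval z i.-1 j = gval z i.-1 j.+1.
Proof.
elim: i j => // i IH j _ d hl hr.
have [[eL _] [eR _]] : (a i.+1 j = a i j /\ enc i.+1 j) /\ (a i.+1 j = a i j.+1 /\ enc i.+1 j).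
  by split; [apply: (H2 _ d).1 | apply: (H2 _ d).2].
case: i IH d hl hr eL eR => [|i] IH d hl hr eL eR; have [? [? [? ?]]] := dom_le d.
  have d0 : gz_dom n 0 j by apply/and3P; split; lia.
  have d1 : gz_dom n 0 j.+1 by apply/and3P; split; lia.
  rewrite /=; have e0 : a 0%N j = a 0%N j.+1.
    by rewrite -[a 0%N j]/(a 0.+1.-1 j) -eL eR.
  by move: (pat_row0 d0) (pat_row0 d1); rewrite e0 => -> [->].
have di : gz_dom n i.+1 j by apply/and3P; split; lia.
have di1 : gz_dom n i.+1 j.+1 by apply/and3P; split; lia.
have [hr' hl'] : jr i.+1 j /\ jl i.+1 j.+1 by apply/(H3 _ di di1).
have [_ e1] := (H2 (ltn0Sn i) di).2 hr'.
have [_ e2] := (H2 (ltn0Sn i) di1).1 hl'.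
rewrite [gval z i.+1 j]gval_succ e1 [gval z i.+1 j.+1]gval_succ e2 hl' hr'.
case: (boolP (jl i.+1 j)) => hli //.
exact: (IH j (ltn0Sn i) di hli hr').
Qed.

Lemma gval_edge z i j : (1 <= i)%N -> gz_dom n i j ->
  (jl i j -> gval z i j = gval z i.-1 j) /\ (jr i j -> gval z i j = gval z i.-1 j.+1) /\
  (~~ jl i j -> ~~ jr i j -> enc i j -> gval z i j = (a i j)%:~R).
Proof.
case: i => // i _ d; split; [|split].
- move=> hl; have [_ e] := (H2 (ltn0Sn i) d).1 hl; by rewrite gval_succ e hl.
- move=> hr; have [_ e] := (H2 (ltn0Sn i) d).2 hr; rewrite gval_succ e.
  case: (boolP (jl i.+1 j)) => hl; first exact: (gval_DE z (ltn0Sn i) d hl hr).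
  by rewrite hr.
- by move=> /negbTE hl /negbTE hr e; rewrite gval_succ e hl hr.
Qed.

Lemma gval_free z i j : freeb i j -> gval z i j = zc z i j.
Proof. by case: i => [|i] /and3P[h1 _ ne] //; rewrite gval_succ (negbTE ne). Qed.

Lemma zc_val z (p : FT) : zc z (val p).1 (val p).2 = z p.
Proof. by rewrite /zc (inord_val (val p).1) (inord_val (val p).2) -surjective_pairing valK. Qed.

Lemma gval_cont i j : continuous (fun z : {ptws FT -> R} => gval z i j).
Proof.
elim: i j => [|i IH] j z; first exact: cont_cst.
rewrite /=; case: (enc i.+1 j); last first.
  by rewrite /zc; case: insub => [p|]; [exact: coord_cont | exact: cont_cst].
case: (jl i.+1 j); first exact: IH.
by case: (jr i.+1 j); [exact: IH | exact: cont_cst].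
Qed.

Definition lin (x y : {ptws FT -> R}) (t : R) : {ptws FT -> R} :=
  fun d => x d + t * (y d - x d).

Lemma gval_aff x y t i j :
  gval (lin x y t) i j = gval x i j + t * (gval y i j - gval x i j).
Proof.
elim: i j => [|i IH] j /=; first ring.
case: ifP => _; last by rewrite /zc; case: insub => [p|] /=; rewrite /lin //; ring.
case: ifP => _; first exact: IH.
by case: ifP => _; [exact: IH | ring].
Qed.

Lemma ycoord_cont i j : continuous (fun y : {ptws Idx n -> R} => ycoord lam y i j).
Proof.
move=> y; rewrite /ycoord; case: (i == 0%N); first exact: cont_cst.
by case: insub => [k|]; [exact: coord_cont | exact: cont_cst].
Qed.

Lemma Emb_cont z : {for z, continuous Emb}.
Proof. by apply: ptws_for => k; exact: gval_cont. Qed.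

Lemma Proj_cont y : {for y, continuous Proj}.
Proof. by apply: ptws_for => p; exact: ycoord_cont. Qed.

Lemma free_dom (p : FT) : gz_dom n (val p).1 (val p).2 /\ (1 <= (val p).1)%N.
Proof. by have /and3P[? ? _] := valP p. Qed.

Lemma Proj_Emb z : Proj (Emb z) = z.
Proof.
apply: funext => p; rewrite /Proj ycoord_E; last exact: (free_dom p).1.
by rewrite gval_free ?zc_val //; exact: (valP p).
Qed.

Lemma hat_gval (y : {ptws Idx n -> R}) : hatC lam P y ->
  forall i j, gz_dom n i j -> ycoord lam y i j = gval (Proj y) i j.
Proof.
move=> hy; elim=> [|i IH] j d; first by [].
have [hl [hr [he _]]] := hy i.+1 j (ltn0Sn i) d.
have [d0 d1] := dom_prev (ltn0Sn i) d.
rewrite gval_succ; case: (boolP (enc i.+1 j)) => e.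
  case: (boolP (jl i.+1 j)) => l; first by rewrite (hl l) IH.
  case: (boolP (jr i.+1 j)) => r; first by rewrite (hr r) IH.
  exact: he.
have Hf : freeb i.+1 j by apply/and3P; split.
have [p [-> [e1 e2]]] := zc_free (Proj y) Hf.
by rewrite /Proj e1 e2.
Qed.

Lemma Emb_Proj (y : {ptws Idx n -> R}) : hatC lam P y -> Emb (Proj y) = y.
Proof.
move=> hy; apply: funext => k; rewrite /Emb -hat_gval // ?ycoord_in //.
case: k => [[i j]]; rewrite /idxb /= => /and3P[? ? ?]; apply/and3P; split; lia.
Qed.

Definition hlo z i j := if (2%:Z <= a i j - a i.-1 j)
  then gval z i j - ((a i j)%:~R - 1) else gval z i j - gval z i.-1 j.
Definition hhi z i j := if a i.-1 j.+1 == a i j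
  then gval z i.-1 j.+1 - gval z i j else (a i j)%:~R - gval z i j.
Definition glo z i j := gval z i j - gval z i.-1 j.
Definition ghi z i j := gval z i.-1 j.+1 - gval z i j.

Lemma Emb_hat z : (forall i j, (1 <= i)%N -> gz_dom n i j -> ~~ enc i j ->
    0 < hlo z i j /\ 0 < hhi z i j) -> hatC lam P (Emb z).
Proof.
move=> Hs i j i1 d /=; have [d0 d1] := dom_prev i1 d.
rewrite (ycoord_E z d) (ycoord_E z d0) (ycoord_E z d1).
have [el [er ee]] := gval_edge z i1 d.
split => //; split => //; split => // nl nr ne.
have [h1 h2] := Hs i j i1 d ne; move: h1 h2; rewrite /hlo /hhi.
by case: ifP => _; case: ifP => _ h1 h2; split; lra.
Qed.

Lemma adj_sym p q : egz_adj n P p q -> egz_adj n P q p.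
Proof.
case=> i [j [i1 d [[h [[-> ->]|[-> ->]]]|[h [[-> ->]|[-> ->]]]]]];
  exists i, j; split => //; [left|left|right|right]; split => //; tauto.
Qed.

Lemma path_trans p q r : egz_path n P p q -> egz_path n P q r -> egz_path n P p r.
Proof. by elim=> // x y z' A _ IH /IH; apply: egz_path_step. Qed.

Lemma path_adj p q : egz_adj n P p q -> egz_path n P p q.
Proof. by move=> A; apply: (egz_path_step A); exact: egz_path_refl. Qed.

Lemma path_sym p q : egz_path n P p q -> egz_path n P q p.
Proof.
elim=> [x|x y z' A _ IH]; first exact: egz_path_refl.
by apply: (path_trans IH); apply: path_adj; exact: adj_sym.
Qed.

Lemma path_l i j : (1 <= i)%N -> gz_dom n i j -> jl i j -> egz_path n P (i, j) (i.-1, j).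
Proof. by move=> i1 d h; apply: path_adj; exists i, j; split => //; left; split => //; left. Qed.

Lemma path_r i j : (1 <= i)%N -> gz_dom n i j -> jr i j -> egz_path n P (i, j) (i.-1, j.+1).
Proof. by move=> i1 d h; apply: path_adj; exists i, j; split => //; right; split => //; left. Qed.

Lemma path_ind' (Q : nat * nat -> nat * nat -> Prop) :
  (forall p, Q p p) -> (forall p q r, Q p q -> Q q r -> Q p r) ->
  (forall p q, Q p q -> Q q p) ->
  (forall i j, (1 <= i)%N -> gz_dom n i j -> jl i j -> Q (i, j) (i.-1, j)) ->
  (forall i j, (1 <= i)%N -> gz_dom n i j -> jr i j -> Q (i, j) (i.-1, j.+1)) ->
  forall p q, egz_path n P p q -> Q p q.
Proof.
move=> Qr Qt Qs Ql Qr' p q; elim => // x y z' A _ IH; apply: (Qt _ y) => //.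
case: A => i [j [i1 d [[h [[-> ->]|[-> ->]]]|[h [[-> ->]|[-> ->]]]]]].
- exact: Ql.
- exact/Qs/Ql.
- exact: Qr'.
- exact/Qs/Qr'.
Qed.

Lemma path_gval z p q : egz_path n P p q -> gval z p.1 p.2 = gval z q.1 q.2.
Proof.
move: p q; apply: (path_ind' (Q := fun p q => gval z p.1 p.2 = gval z q.1 q.2)).
- by [].
- by move=> ? ? ? -> ->.
- by move=> ? ? ->.
- by move=> i j i1 d h; have [el _] := gval_edge z i1 d; exact: el.
- by move=> i j i1 d h; have [_ [er _]] := gval_edge z i1 d; exact: er.
Qed.

Lemma path_a p q : egz_path n P p q -> a p.1 p.2 = a q.1 q.2.
Proof.
move: p q; apply: (path_ind' (Q := fun p q => a p.1 p.2 = a q.1 q.2)).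
- by [].
- by move=> ? ? ? -> ->.
- by move=> ? ? ->.
- by move=> i j i1 d h; have [e _] := (H2 i1 d).1 h.
- by move=> i j i1 d h; have [e _] := (H2 i1 d).2 h.
Qed.

Lemma hat_path (y : {ptws Idx n -> R}) p q : hatC lam P y -> egz_path n P p q ->
  ycoord lam y p.1 p.2 = ycoord lam y q.1 q.2.
Proof.
move=> hy; move: p q.
apply: (path_ind' (Q := fun p q => ycoord lam y p.1 p.2 = ycoord lam y q.1 q.2)).
- by [].
- by move=> ? ? ? -> ->.
- by move=> ? ? ->.
- by move=> i j i1 d h; have [el _] := hy i j i1 d; exact: el.
- by move=> i j i1 d h; have [_ [er _]] := hy i j i1 d; exact: er.
Qed.

Lemma ycoord_sum m (x : 'I_m -> {ptws Idx n -> R}) (c : 'I_m -> R) (y : {ptws Idx n -> R}) :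
  \sum_(k < m) c k = 1 -> (forall t, y t = \sum_(k < m) c k * x k t) ->
  forall i j, ycoord lam y i j = \sum_(k < m) c k * ycoord lam (x k) i j.
Proof.
move=> Hc Hy i j; rewrite /ycoord; case: (i == 0%N).
  by rewrite -mulr_suml Hc mul1r.
case: insub => [k|]; first exact: Hy.
by rewrite big1 // => k _; rewrite mulr0.
Qed.

Lemma L_path (y : {ptws Idx n -> R}) p q : affine_span (hatC lam P) y -> egz_path n P p q ->
  ycoord lam y p.1 p.2 = ycoord lam y q.1 q.2.
Proof.
case=> m [x [c [Hx Hc Hy]]] pq; rewrite !(ycoord_sum Hc Hy).
by apply: eq_bigr => k _; rewrite (hat_path (Hx k) pq).
Qed.

Lemma hat_L (y : {ptws Idx n -> R}) : hatC lam P y -> affine_span (hatC lam P) y.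
Proof.
move=> hy; exists 1%N, (fun _ => y), (fun _ => 1); split => //.
  by rewrite big_ord1.
by move=> t; rewrite big_ord1 mul1r.
Qed.

Lemma int_ltR (x y : int) : x < y -> x%:~R + 1 <= (y%:~R : R).
Proof. by rewrite -lezD1 -(ler_int R) intrD. Qed.

Fixpoint eps (i j : nat) {struct i} : R :=
  match i with
  | 0 => 0
  | i'.+1 => if enc i'.+1 j then
               (if jl i'.+1 j then eps i' j else if jr i'.+1 j then eps i' j.+1 else 0)
             else if a i' j.+1 == a i'.+1 j then
               (if a i' j == a i'.+1 j then (eps i' j + eps i' j.+1) / 2
                else (eps i' j.+1 + 1) / 2)
             else 1 / 2
  end.

Lemma eps_succ i j : eps i.+1 j =
  if enc i.+1 j then
    (if jl i.+1 j then eps i j else if jr i.+1 j then eps i j.+1 else 0)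
  else if a i j.+1 == a i.+1 j then
    (if a i j == a i.+1 j then (eps i j + eps i j.+1) / 2
     else (eps i j.+1 + 1) / 2)
  else 1 / 2.
Proof. by []. Qed.

Lemma eps_bd i j : 0 <= eps i j /\ eps i j < 1.
Proof.
elim: i j => [|i IH] j; first by split => //; exact: ltr01.
have [a1 a2] := IH j; have [b1 b2] := IH j.+1.
rewrite eps_succ; case: ifP => _.
  by case: ifP => _ //; case: ifP => _ //; split => //; exact: ltr01.
by case: ifP => _; [case: ifP => _|]; split; lra.
Qed.

Definition z0 : {ptws FT -> R} := fun p => (a (val p).1 (val p).2)%:~R - eps (val p).1 (val p).2.

Lemma gval_z0 i j : gz_dom n i j -> gval z0 i j = (a i j)%:~R - eps i j.
Proof.
elim: i j => [|i IH] j d.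
  by rewrite /= pat_row0 // subr0.
have [d0 d1] := dom_prev (ltn0Sn i) d.
rewrite gval_succ eps_succ; case: (boolP (enc i.+1 j)) => e.
  case: (boolP (jl i.+1 j)) => l.
    by have [-> _] := (H2 (ltn0Sn i) d).1 l; exact: IH.
  case: (boolP (jr i.+1 j)) => r.
    by have [-> _] := (H2 (ltn0Sn i) d).2 r; exact: IH.
  by rewrite subr0.
have Hf : freeb i.+1 j by apply/and3P; split.
have [p [-> [e1 e2]]] := zc_free z0 Hf.
by rewrite /z0 e1 e2 eps_succ (negbTE e).
Qed.

Definition Pinv i := forall j, gz_dom n i j -> gz_dom n i j.+1 -> a i j = a i j.+1 ->
  eps i j.+1 < eps i j \/ egz_path n P (i, j) (i, j.+1).

Lemma path_eps p q : egz_path n P p q -> gz_dom n p.1 p.2 -> gz_dom n q.1 q.2 ->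
  eps p.1 p.2 = eps q.1 q.2.
Proof.
move=> pq dp dq; have := path_gval z0 pq; rewrite !gval_z0 // (path_a pq).
by move=> h; lra.
Qed.

Lemma free_strict i j : (1 <= i)%N -> gz_dom n i j -> ~~ enc i j -> Pinv i.-1 ->
  (a i.-1 j = a i j -> eps i j < eps i.-1 j) /\
  (a i.-1 j.+1 = a i j -> eps i.-1 j.+1 < eps i j) /\ 0 < eps i j.
Proof.
case: i => // i _ d ne Pi; have [d0 d1] := dom_prev (ltn0Sn i) d.
have [le1 le2] := pat_le (ltn0Sn i) d; rewrite /= in le1 le2 d0 d1.
have key : a i j = a i.+1 j -> a i j.+1 = a i.+1 j /\ eps i j.+1 < eps i j.
  move=> eL; have eR : a i j.+1 = a i.+1 j.
    move: le2; rewrite le_eqVlt => /orP[/eqP -> //|lt]; exfalso.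
    rewrite -eL in lt; have [e _] := H5 (ltn0Sn i) d lt (esym eL).
    by move: ne; rewrite e.
  split => //; have [//|pth] := Pi j d0 d1 (etrans eL (esym eR)).
  have [e _ _] := H7 (ltn0Sn i) d (etrans eL (esym eR)) (esym eL) pth.
  by move: ne; rewrite e.
have [a1 a2] := eps_bd i j; have [b1 b2] := eps_bd i j.+1.
rewrite eps_succ (negbTE ne); split; [|split].
- move=> eL; have [eR lt] := key eL.
  by rewrite eR eqxx eL eqxx; lra.
- move=> eR; rewrite eR eqxx; case: ifP => [/eqP eL|_]; last by lra.
  by have [_ lt] := key eL; lra.
- case: ifP => _; last by lra.
  case: ifP => [/eqP eL|_]; last by lra.
  by have [_ lt] := key eL; lra.
Qed.

Lemma RL i j : (1 <= i)%N -> gz_dom n i j -> Pinv i.-1 -> a i.-1 j = a i j ->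
  eps i j < eps i.-1 j \/ egz_path n P (i, j) (i.-1, j).
Proof.
move=> i1 d Pi eL.
case: (boolP (enc i j)) => e; last by left; exact: ((free_strict i1 d e Pi).1 eL).
case: (boolP (jl i j)) => l; first by right; exact: path_l.
have [d0 d1] := dom_prev i1 d.
have [le1 le2] := pat_le i1 d.
case: (boolP (jr i j)) => r.
  have [eR _] := (H2 i1 d).2 r.
  have epseq : eps i j = eps i.-1 j.+1.
    by case: i i1 d {Pi eL le1 le2 d0 d1 eR} l r e => // i _ d l r e; rewrite eps_succ e (negbTE l) r.
  have [lt|pth] := Pi j d0 d1 (etrans eL eR); first by left; rewrite epseq.
  right; apply: path_trans (path_r i1 d r) _; exact: path_sym.
exfalso; have [lt|eq] : a i.-1 j < a i.-1 j.+1 \/ a i.-1 j = a i.-1 j.+1.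
  by rewrite eL; move: le2; rewrite le_eqVlt => /orP[/eqP->|->]; [right|left].
  have [_ l'] := H5 i1 d lt (esym eL); by move: l; rewrite l'.
have [l'|r'] := H8 i1 d eq (esym eL) e; [by move: l; rewrite l' | by move: r; rewrite r'].
Qed.

Lemma RR i j : (1 <= i)%N -> gz_dom n i j -> Pinv i.-1 -> a i j = a i.-1 j.+1 ->
  eps i.-1 j.+1 < eps i j \/ egz_path n P (i, j) (i.-1, j.+1).
Proof.
move=> i1 d Pi eR.
case: (boolP (enc i j)) => e; last by left; exact: ((free_strict i1 d e Pi).2.1 (esym eR)).
have [d0 d1] := dom_prev i1 d.
have [le1 le2] := pat_le i1 d.
case: (boolP (jl i j)) => l.
  have [eL _] := (H2 i1 d).1 l.
  have epseq : eps i j = eps i.-1 j.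
    by case: i i1 d {Pi eR le1 le2 d0 d1 eL} l e => // i _ d l e; rewrite eps_succ e l.
  have [lt|pth] := Pi j d0 d1 (etrans (esym eL) eR); first by left; rewrite epseq.
  by right; apply: path_trans (path_l i1 d l) pth.
case: (boolP (jr i j)) => r; first by right; exact: path_r.
exfalso; have [lt|eq] : a i.-1 j < a i.-1 j.+1 \/ a i.-1 j = a i.-1 j.+1.
  by rewrite -eR; move: le1; rewrite le_eqVlt => /orP[/eqP->|->]; [right|left].
  by move: r; rewrite (H6 i1 d lt eR e).
have [l'|r'] := H8 i1 d eq (etrans eR (esym eq)) e; [by move: l; rewrite l' | by move: r; rewrite r'].
Qed.

Lemma Pinv_all i : Pinv i.
Proof.
elim: i => [|i IH] j d dj e.
  right; have [_ l r] := H4 d dj e.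
  have [? [? [? ?]]] := dom_le d; have [? [? [? ?]]] := dom_le dj.
  have d1 : gz_dom n 1 j by apply/and3P; split; lia.
  exact: (path_trans (path_sym (path_l (ltn0Sn 0) d1 l)) (path_r (ltn0Sn 0) d1 r)).
have [d0 d1] := dom_prev (ltn0Sn i) d.
have [le1 le2] := pat_le (ltn0Sn i) d.
have [le3 le4] := pat_le (ltn0Sn i) dj.
rewrite /= in d0 d1 le1 le2 le3 le4.
have eR : a i.+1 j = a i j.+1 by apply/eqP; rewrite eq_le le2 e le3.
have eR' : a i j.+1 = a i.+1 j.+1 by rewrite -e.
have [A|A] := RR (ltn0Sn i) d IH eR;
have [B|B] := RL (ltn0Sn i) dj IH eR'.
- by left; lra.
- have h : eps i.+1 j.+1 = eps i j.+1 := path_eps B dj d1.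
  by left; lra.
- have h : eps i.+1 j = eps i j.+1 := path_eps A d d1.
  by left; lra.
- by right; apply: path_trans A _; exact: path_sym.
Qed.

Lemma GZ0 i j : (1 <= i)%N -> gz_dom n i j ->
  (0 < glo z0 i j \/ egz_path n P (i, j) (i.-1, j)) /\
  (0 < ghi z0 i j \/ egz_path n P (i, j) (i.-1, j.+1)).
Proof.
move=> i1 d; have [d0 d1] := dom_prev i1 d.
have [le1 le2] := pat_le i1 d.
have [a1 a2] := eps_bd i j; have [b1 b2] := eps_bd i.-1 j; have [c1 c2] := eps_bd i.-1 j.+1.
have Pi := @Pinv_all i.-1.
rewrite /glo /ghi !gval_z0 //; split.
  move: le1; rewrite le_eqVlt => /orP[/eqP eL|lt].
    have [lt|pth] := RL i1 d Pi eL; last by right.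
    by left; rewrite eL; lra.
  by left; have := int_ltR lt; lra.
move: le2; rewrite le_eqVlt => /orP[/eqP eR|lt].
  have [lt|pth] := RR i1 d Pi eR; last by right.
  by left; rewrite eR; lra.
by left; have := int_ltR lt; lra.
Qed.

Lemma hat_z0 i j : (1 <= i)%N -> gz_dom n i j -> ~~ enc i j ->
  0 < hlo z0 i j /\ 0 < hhi z0 i j.
Proof.
move=> i1 d ne; have [d0 d1] := dom_prev i1 d.
have [le1 le2] := pat_le i1 d.
have [a1 a2] := eps_bd i j; have [b1 b2] := eps_bd i.-1 j; have [c1 c2] := eps_bd i.-1 j.+1.
have [s1 [s2 s3]] := free_strict i1 d ne (@Pinv_all i.-1).
rewrite /hlo /hhi !gval_z0 //; split.
  case: ifP => _; first by lra.
  move: le1; rewrite le_eqVlt => /orP[/eqP eL|lt].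
    by have := s1 eL; rewrite eL; lra.
  by have := int_ltR lt; lra.
case: ifP => [/eqP eR|_]; last by lra.
by have := s2 eR; rewrite eR; lra.
Qed.

Definition KT := (('I_n.+1 * 'I_n.+1) * (bool * bool))%type.

Definition Fk (k : KT) (z : {ptws FT -> R}) : R :=
  let i := (k.1.1 : nat) in let j := (k.1.2 : nat) in
  if (1 <= i)%N && gz_dom n i j then
    match k.2 with
    | (true, true) => if ~~ enc i j then hlo z i j else 1
    | (true, false) => if ~~ enc i j then hhi z i j else 1
    | (false, true) => if 0 < glo z0 i j then glo z i j else 1
    | (false, false) => if 0 < ghi z0 i j then ghi z i j else 1
    end
  else 1.

Lemma Fk_cont k x : {for x, continuous (Fk k)}.
Proof.
case: k => [[i j] [[] []]]; rewrite /Fk /=; case: (_ && _); try exact: cont_cst.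
- case: (~~ _); last exact: cont_cst.
  rewrite /hlo; case: (_ <= _); apply: cont_sub; try exact: cont_cst; exact: gval_cont.
- case: (~~ _); last exact: cont_cst.
  rewrite /hhi; case: (_ == _); apply: cont_sub; try exact: cont_cst; exact: gval_cont.
- case: (0 < _); last exact: cont_cst.
  by rewrite /glo; apply: cont_sub; exact: gval_cont.
- case: (0 < _); last exact: cont_cst.
  by rewrite /ghi; apply: cont_sub; exact: gval_cont.
Qed.

Lemma Fk_aff k (x y : {ptws FT -> R}) (t : R) :
  Fk k (fun d => x d + t * (y d - x d)) = Fk k x + t * (Fk k y - Fk k x).
Proof.
change (fun d => x d + t * (y d - x d)) with (lin x y t).
case: k => [[i j] [[] []]]; rewrite /Fk /=; case: (_ && _); try ring;
  [case: (~~ _) | case: (~~ _) | case: (0 < _) | case: (0 < _)]; try ring;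
  rewrite ?/hlo ?/hhi ?/glo ?/ghi; try (case: (_ <= _)); try (case: (_ == _));
  rewrite !gval_aff; ring.
Qed.

Lemma Fk_pos k : 0 < Fk k z0.
Proof.
case: k => [[i j] [[] []]]; rewrite /Fk /=; case: andP => [[i1 d]|_]; try exact: ltr01.
- case: (boolP (~~ enc i j)) => ne; last exact: ltr01.
  by have [] := hat_z0 i1 d ne.
- case: (boolP (~~ enc i j)) => ne; last exact: ltr01.
  by have [] := hat_z0 i1 d ne.
- by case: ifP => [h|_]; [exact: h | exact: ltr01].
- by case: ifP => [h|_]; [exact: h | exact: ltr01].
Qed.

Definition Sset := Spoly Fk.

Lemma ord_of i j : gz_dom n i j -> exists ij : 'I_n.+1 * 'I_n.+1, (ij.1 : nat) = i /\ (ij.2 : nat) = j.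
Proof.
move=> d; have [? [? [? ?]]] := dom_le d.
have hi : (i < n.+1)%N by lia.
have hj : (j < n.+1)%N by lia.
by exists (Ordinal hi, Ordinal hj).
Qed.

Lemma S_hat z : Sset z -> forall i j, (1 <= i)%N -> gz_dom n i j -> ~~ enc i j ->
  0 < hlo z i j /\ 0 < hhi z i j.
Proof.
move=> Sz i j i1 d ne; have [ij [e1 e2]] := ord_of d.
have := Sz (ij, (true, true)); have := Sz (ij, (true, false)).
by rewrite /Fk /= e1 e2 i1 d ne /=.
Qed.

Lemma S_g z : Sset z -> forall i j, (1 <= i)%N -> gz_dom n i j ->
  (0 < glo z0 i j -> 0 < glo z i j) /\ (0 < ghi z0 i j -> 0 < ghi z i j).
Proof.
move=> Sz i j i1 d; have [ij [e1 e2]] := ord_of d.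
have := Sz (ij, (false, true)); have := Sz (ij, (false, false)).
rewrite /Fk /= e1 e2 i1 d /= => h2 h1; split => p.
  by move: h1; rewrite p.
by move: h2; rewrite p.
Qed.

Lemma near_triv (T : topologicalType) (w : T) (Q : T -> Prop) :
  (forall v, Q v) -> nbhs w Q.
Proof. by move=> h; apply: filterS (@filterT _ (nbhs w) _) => v _; exact: h. Qed.

Lemma near_lt (T : topologicalType) (f g : T -> R) w :
  continuous f -> continuous g -> f w < g w -> nbhs w [set v | f v < g v].
Proof.
move=> fc gc fg.
have hc : continuous (fun v => g v - f v) by move=> v; apply: cont_sub; [exact: gc | exact: fc].
move/continuousP: hc => hc; have ho := hc _ (@open_gt R 0).
have : nbhs w ((fun v => g v - f v) @^-1` [set x | 0 < x]).
  by apply: open_nbhs_nbhs; split => //=; rewrite subr_gt0.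
by apply: filterS => v /=; rewrite subr_gt0.
Qed.

Lemma S_cell z : Sset z -> cell lam P (Emb z).
Proof.
move=> Sz; have hE : hatC lam P (Emb z) := Emb_hat (S_hat Sz).
pose cond (ij : 'I_n.+1 * 'I_n.+1) (w : {ptws Idx n -> R}) : Prop :=
  (1 <= ij.1)%N -> gz_dom n ij.1 ij.2 ->
  (0 < glo z0 ij.1 ij.2 -> ycoord lam w (ij.1).-1 ij.2 < ycoord lam w ij.1 ij.2) /\
  (0 < ghi z0 ij.1 ij.2 -> ycoord lam w ij.1 ij.2 < ycoord lam w (ij.1).-1 (ij.2).+1).
pose U : set {ptws Idx n -> R} := [set w | forall ij, cond ij w].
have UL : U `&` affine_span (hatC lam P) `<=` GZpoly lam `&` affine_span (hatC lam P).
  move=> w [Uw Lw]; split => // i j i1 j1 hij.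
  have d : gz_dom n i j by apply/and3P; split; lia.
  have [ij [e1 e2]] := ord_of d.
  have := Uw ij; rewrite /cond e1 e2 => /(_ i1 d) [u1 u2].
  have [g1 g2] := GZ0 i1 d; split.
    case: g1 => [p|pth]; first exact: ltW (u1 p).
    have e : ycoord lam w i j = ycoord lam w i.-1 j := L_path Lw pth.
    by rewrite e.
  case: g2 => [p|pth]; first exact: ltW (u2 p).
  have e : ycoord lam w i j = ycoord lam w i.-1 j.+1 := L_path Lw pth.
  by rewrite e.
have UE : U (Emb z).
  move=> ij i1 d; have [d0 d1] := dom_prev i1 d.
  rewrite (ycoord_E z d) (ycoord_E z d0) (ycoord_E z d1).
  have [s1 s2] := S_g Sz i1 d.
  by split => /[dup] p; [move/s1; rewrite /glo subr_gt0 | move/s2; rewrite /ghi subr_gt0].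
have LE := hat_L hE.
split => //; split; first by apply: UL; split.
exists U; split => //.
rewrite openE => w Uw; rewrite /interior.
have : \forall v \near w, forall ij, cond ij v.
  have FF : Filter (nbhs w) by exact: _.
  apply: (@filter_forall _ _ cond (nbhs w) FF) => ij; rewrite /cond.
  case: (boolP ((1 <= ij.1)%N && gz_dom n ij.1 ij.2)) => [/andP[i1 d]|hn]; last first.
    by apply: near_triv => v i1 d; move: hn; rewrite i1 d.
  have [u1 u2] := Uw ij i1 d.
  have N1 : \forall v \near w, (0 < glo z0 ij.1 ij.2 -> ycoord lam v (ij.1).-1 ij.2 < ycoord lam v ij.1 ij.2).
    case: (boolP (0 < glo z0 ij.1 ij.2)) => p; last by apply: near_triv => v hp; case/negP: p.
    have Nl := @near_lt _ (fun v => ycoord lam v (ij.1).-1 ij.2) (fun v => ycoord lam v ij.1 ij.2) w (@ycoord_cont _ _) (@ycoord_cont _ _) (u1 p).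
    by apply: (filterS _ Nl) => v h _.
  have N2 : \forall v \near w, (0 < ghi z0 ij.1 ij.2 -> ycoord lam v ij.1 ij.2 < ycoord lam v (ij.1).-1 (ij.2).+1).
    case: (boolP (0 < ghi z0 ij.1 ij.2)) => p; last by apply: near_triv => v hp; case/negP: p.
    have Nl := @near_lt _ (fun v => ycoord lam v ij.1 ij.2) (fun v => ycoord lam v (ij.1).-1 (ij.2).+1) w (@ycoord_cont _ _) (@ycoord_cont _ _) (u2 p).
    by apply: (filterS _ Nl) => v h _.
  by apply: (filterS _ (filterI N1 N2)) => v [h1 h2] _ _.
by [].
Qed.

Lemma z0S : Sset z0.
Proof. by move=> k; exact: Fk_pos. Qed.

Lemma ycoord_comb (y x : {ptws Idx n -> R}) (t : R) i j :
  ycoord lam (fun k => (1 + t) * y k - t * x k) i j =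
  (1 + t) * ycoord lam y i j - t * ycoord lam x i j.
Proof. by rewrite /ycoord; case: (i == 0%N) => /=; [ring | case: insub => [k|] //=; ring]. Qed.

Lemma strict_keep (y : {ptws Idx n -> R}) (p q : nat * nat) :
  cell lam P y ->
  (forall w : {ptws Idx n -> R}, GZpoly lam w -> ycoord lam w p.1 p.2 <= ycoord lam w q.1 q.2) ->
  ycoord lam (Emb z0) p.1 p.2 < ycoord lam (Emb z0) q.1 q.2 ->
  ycoord lam y p.1 p.2 < ycoord lam y q.1 q.2.
Proof.
case=> hy [[GZy Ly] [U [oU Uy UL]]] Hle Hx.
have hx : hatC lam P (Emb z0) := (S_cell z0S).1.
rewrite ltNge; apply/negP => hle.
pose yt (t : R) : {ptws Idx n -> R} := fun k => (1 + t) * y k - t * Emb z0 k.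
have yt0 : yt 0 = y by apply: funext => k; rewrite /yt; ring.
have ytc : {for 0, continuous yt}.
  apply: ptws_for => k; apply: cont_sub; apply: cont_mul; try exact: cont_cst.
  - by apply: cont_add; [exact: cont_cst | exact: cvg_id].
  - exact: cvg_id.
have N : nbhs (yt 0) U by rewrite yt0; apply: open_nbhs_nbhs; split.
have N0 : nbhs (0:R) (yt @^-1` U) := ytc _ N.
move/nbhs_ballP: N0 => [e e0' He].
have e0 : 0 < e := e0'.
have hb : ball (0:R) e (e / 2).
  rewrite -ball_normE /ball_ /= sub0r normrN gtr0_norm; lra.
have Ut := He _ hb.
have Lt : affine_span (hatC lam P) (yt (e / 2)).
  exists 2%N, (fun k : 'I_2 => if k == ord0 then y else Emb z0),
    (fun k : 'I_2 => if k == ord0 then 1 + e / 2 else - (e / 2)); split.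
  - by move=> k; case: (k == ord0).
  - by rewrite big_ord_recl big_ord1 /=; ring.
  - by move=> t; rewrite big_ord_recl big_ord1 /= /yt; ring.
have [GZt _] := UL _ (conj Ut Lt).
have := Hle _ GZt; rewrite !ycoord_comb => h.
nra.
Qed.

Lemma cell_S (y : {ptws Idx n -> R}) : cell lam P y -> Sset (Proj y).
Proof.
move=> cy; have hy : hatC lam P y by case: cy.
case=> [[i j] [[] []]]; rewrite /Fk /=; case: andP => [[i1 d]|_]; try exact: ltr01;
  have [d0 d1] := dom_prev i1 d.
- case: (boolP (~~ enc i j)) => ne; last exact: ltr01.
  have [_ [_ [_ hf]]] := hy i j i1 d.
  have nl : ~~ jl i j by apply/negP => /((H2 i1 d).1) [_ e]; move: ne; rewrite e.
  have nr : ~~ jr i j by apply/negP => /((H2 i1 d).2) [_ e]; move: ne; rewrite e.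
  have [h1 _] := hf nl nr ne.
  rewrite /hlo -(hat_gval hy d) -(hat_gval hy d0).
  by move: h1; case: ifP => _ h1; lra.
- case: (boolP (~~ enc i j)) => ne; last exact: ltr01.
  have [_ [_ [_ hf]]] := hy i j i1 d.
  have nl : ~~ jl i j by apply/negP => /((H2 i1 d).1) [_ e]; move: ne; rewrite e.
  have nr : ~~ jr i j by apply/negP => /((H2 i1 d).2) [_ e]; move: ne; rewrite e.
  have [_ h2] := hf nl nr ne.
  rewrite /hhi -(hat_gval hy d) -(hat_gval hy d1).
  by move: h2; case: ifP => _ h2; lra.
- case: ifP => [p|_]; last exact: ltr01.
  rewrite /glo -(hat_gval hy d) -(hat_gval hy d0) subr_gt0.
  have [? [? [? ?]]] := dom_le d.
  apply: (@strict_keep y ((i : nat).-1, (j : nat)) ((i : nat), (j : nat)) cy).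
    by move=> w Gw; have [] := Gw i j i1 (ltac:(lia)) (ltac:(lia)).
  by rewrite /= (ycoord_E _ d) (ycoord_E _ d0) -subr_gt0.
- case: ifP => [p|_]; last exact: ltr01.
  rewrite /ghi -(hat_gval hy d) -(hat_gval hy d1) subr_gt0.
  have [? [? [? ?]]] := dom_le d.
  apply: (@strict_keep y ((i : nat), (j : nat)) ((i : nat).-1, (j : nat).+1) cy).
    by move=> w Gw; have [] := Gw i j i1 (ltac:(lia)) (ltac:(lia)).
  by rewrite /= (ycoord_E _ d) (ycoord_E _ d1) -subr_gt0.
Qed.

Lemma cell_Sset : homeo' (@cell R n lam P) Sset.
Proof.
exists Proj, Emb; split.
- exact: cell_S.
- exact: S_cell.
- by move=> y cy; apply: Emb_Proj; case: cy.
- by move=> z _; exact: Proj_Emb.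
- by split => [y _|z _]; [exact: Proj_cont | exact: Emb_cont].
Qed.

Lemma rowsum (i : nat) : (i < n)%N ->
  (\sum_(j < n.+1) (freeb i j : nat) = \sum_(1 <= j < (n - i).+1) (~~ enc i j : nat))%N.
Proof.
move=> hi.
rewrite -(big_mkord xpredT (fun j => (freeb i j : nat))).
rewrite (@big_cat_nat _ _ _ 1) //= big_nat1.
have -> : freeb i 0 = false by apply/negP => /and3P[_ /and3P[_ h _] _].
rewrite add0n (@big_cat_nat _ _ _ (n - i).+1) //=; last by lia.
rewrite [X in (_ + X)%N]big1_seq ?addn0; last first.
  move=> j /andP[_]; rewrite mem_index_iota => hj.
  apply/eqP; rewrite eqb0; apply/negP => /and3P[_ /and3P[_ _ h] _]; lia.
apply: eq_big_nat => j hj.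
have dj : gz_dom n i j by apply/and3P; split; lia.
case: i hi dj {hj} => [|i] hi dj.
  by rewrite /freeb /= (H1 dj).
by rewrite /freeb dj.
Qed.

Lemma card_FT : #|{: FT}| = egz_rank n P.
Proof.
rewrite card_sig.
have -> : #|[pred x : 'I_n.+1 * 'I_n.+1 | freeb x.1 x.2]| =
  (\sum_(i < n.+1) \sum_(j < n.+1) (freeb i j : nat))%N.
  rewrite -sum1_card big_mkcond /= pair_bigA /=.
  by apply: eq_bigr => [[i j]] _; rewrite inE.
rewrite big_ord_recr /= [X in (_ + X)%N]big1 ?addn0; last first.
  move=> j _; have e : freeb n j = false.
    by apply/negP => /and3P[_ /and3P[h _ _] _]; rewrite ltnn in h.
  by rewrite /= e.
rewrite /egz_rank; apply: eq_bigr => i _; exact: rowsum.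
Qed.

Lemma main_sec : (exists y, @cell R n lam P y) /\
  homeomorphic (@cell R n lam P) (@open_ball R (egz_rank n P)).
Proof.
split; first by exists (Emb z0); exact: S_cell z0S.
rewrite -card_FT; apply: homeo'_homeo.
apply: (homeo'_trans cell_Sset).
apply: (homeo'_trans (poly_RD (z0 := z0) (@Fk_cont) (@Fk_aff) (@Fk_pos))).
apply: (homeo'_trans (RD_ball _)).
exact: reindex_ball.
Qed.

End GZ.


Unset Implicit Arguments.

Theorem lemma5p2 (R : realType) (n : nat) (lam : nat -> nat) (P : egz_data) :
  is_partition n lam -> is_enhanced_GZ n lam P ->
  (exists y, @cell R n lam P y) /\
  homeomorphic (@cell R n lam P) (@open_ball R (egz_rank n P)).
Proof. move=> _ HP; exact: (@main_sec R n lam P HP). Qed.
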